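(* Let $\sigma_k > 0$, let $U \sim \operatorname{Rayleigh}(1)$ (density $u e^{-u^2/2}$ on $u\ge 0$), and let $\theta$ be uniform on $(-\pi,\pi]$, independent of $U$. Set $a = \sigma_k U$ and $z = a e^{i\theta}$. Let $Q_a$ be an $N_a$-level Lloyd–Max quantizer for $U$ under squared error, with normalized distortion $C_{\mathrm{LM}}(N_a) = \mathbb{E}(U-Q_a(U))^2$, and set $\hat a = \sigma_k Q_a(U)$. Let $N_p \ge 1$, $h = \pi/N_p$, and let $\hat\theta$ be obtained by rounding $\theta$ to the nearest of the $N_p$ uniform phase levels $\{(2k+1)h : k = 0,1,\dots,N_p-1\}$ (modulo $2\pi$). Let $\hat z = \hat a e^{i\hat\theta}$. Define $M_a(N_a) = \mathbb{E}[U Q_a(U)]$ and $\eta(N_p) = 1 - \frac{\sin(\pi/N_p)}{\pi/N_p}$. Then $$\mathbb{E}\|z-\hat z\|^2 = \sigma_k^2 C_{\mathrm{LM}}(N_a) + 2\sigma_k^2 M_a(N_a)\,\eta(N_p).$$ Furthermore, if $Q_a$ is a centroid Lloyd–Max quantizer, then $M_a(N_a) = 2 - C_{\mathrm{LM}}(N_a)$, hence $$\mathbb{E}\|z-\hat z\|^2 = \sigma_k^2\Bigl[C_{\mathrm{LM}}(N_a) + 2\bigl(2-C_{\mathrm{LM}}(N_a)\bigr)\eta(N_p)\Bigr]$$ and $$\mathbb{E}\|z-\hat z\|^2 \le \sigma_k^2\Bigl[C_{\mathrm{LM}}(N_a) + \bigl(2-C_{\mathrm{LM}}(N_a)\bi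gr)\frac{\pi^2}{3N_p^2}\Bigr].$$
   Context: An $N_a$-level scalar quantizer $Q_a$ partitions $[0,\infty)$ into $N_a$ cells and maps each cell to a reconstruction level. A centroid Lloyd–Max quantizer for $U$ is one whose reconstruction level on each cell equals the conditional mean of $U$ given that $U$ lies in the cell, i.e. $Q_a(U) = \mathbb{E}[U \mid Q_a(U)]$. The phase grid has adjacent levels spaced by $2h$. *)

(* Defs.v *)
From mathcomp Require Import all_boot all_order all_algebra.
From mathcomp Require Import all_classical all_reals all_analysis.
Set Implicit Arguments. Unset Strict Implicit. Unset Printing Implicit Defensive.
Import Order.TTheory GRing.Theory Num.Theory.
Local Open Scope classical_set_scope.
Local Open Scope ring_scope.

Section Defs.
Variable R : realType.
Notation mu := (@lebesgue_measure R).

Definition rayleigh_pdf (u : R) : R := u * expR (- (u ^+ 2) / 2).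

Definition E_U (f : R -> R) : \bar R :=
  (\int[mu]_(u in [set u : R | (0 <= u)%R]) (f u * rayleigh_pdf u)%:E)%E.

(* E[f(U, theta)] for U ~ Rayleigh(1) and theta ~ Uniform(-pi, pi],
   independent: integral against the product density. *)
Definition E_joint (f : R -> R -> R) : \bar R :=
  (\int[mu]_(u in [set u : R | (0 <= u)%R])
     \int[mu]_(t in [set t : R | (- pi < t <= pi)%R])
        (f u t * (rayleigh_pdf u / (2 * pi)))%:E)%E.

Definition qcell (t : nat -> R) (N i : nat) : set R :=
  if (i.+1 < N)%N then [set u | t i <= u < t i.+1] else [set u | t i <= u].

Definition quantizer_with (N : nat) (t y : nat -> R) (Q : R -> R) : Prop :=
  t 0%N = 0 /\ (forall i, (i.+1 < N)%N -> t i < t i.+1) /\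
  (forall i u, (i < N)%N -> qcell t N i u -> Q u = y i).

Definition quantizer (N : nat) (Q : R -> R) : Prop :=
  exists t y, quantizer_with N t y Q.

Definition C_LM (Q : R -> R) : \bar R := E_U (fun u => (u - Q u) ^+ 2).
Definition M_a (Q : R -> R) : \bar R := E_U (fun u => u * Q u).

Definition lloyd_max (N : nat) (Q : R -> R) : Prop :=
  quantizer N Q /\ forall Q', quantizer N Q' -> (C_LM Q <= C_LM Q')%E.

(* centroid condition: each reconstruction level is the conditional mean
   of U given that U lies in the cell (written as y_i P(cell) = E[U; cell]). *)
Definition centroid_quantizer (N : nat) (Q : R -> R) : Prop :=
  exists t y, quantizer_with N t y Q /\
    forall i, (i < N)%N ->
      ((y i)%:E * \int[mu]_(u in qcell t N i) (rayleigh_pdf u)%:E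
       = \int[mu]_(u in qcell t N i) (u * rayleigh_pdf u)%:E)%E.

(* phase quantizer: round theta to the nearest of the levels (2k+1)h,
   h = pi/Np, modulo 2 pi (cells [2kh, 2(k+1)h), ties broken upward) *)
Definition phase_h (Np : nat) : R := pi / Np%:R.
Definition phase_q (Np : nat) (th : R) : R :=
  ((2 * (Num.floor (th / (2 * phase_h Np)))%:~R + 1) * phase_h Np).

Definition eta (Np : nat) : R := 1 - sin (pi / Np%:R) / (pi / Np%:R).

(* |z - zhat|^2 with z = sigma u e^{i t}, zhat = sigma Q(u) e^{i phase_q t} *)
Definition sq_err (sigma : R) (Q : R -> R) (Np : nat) (u t : R) : R :=
  (sigma * u * cos t - sigma * Q u * cos (phase_q Np t)) ^+ 2 +
  (sigma * u * sin t - sigma * Q u * sin (phase_q Np t)) ^+ 2.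

End Defs.

(* Main.v *)
Require Import Defs.
From mathcomp Require Import all_boot all_order all_algebra.
From mathcomp Require Import all_classical all_reals all_analysis.
From mathcomp Require Import measurable_realfun.
From mathcomp Require Import ring lra.
Import Order.TTheory GRing.Theory Num.Theory.
Local Open Scope ring_scope.

Module Helpers.
Set Implicit Arguments. Unset Strict Implicit. Unset Printing Implicit Defensive.
Import numFieldNormedType.Exports.
Local Open Scope classical_set_scope.
Local Open Scope ring_scope.

Section S1.
Variable R : realType.
Notation mu := (@lebesgue_measure R).

Lemma derive1_is (f : R -> R) (x d : R) : is_derive x 1 f d -> derive1 f x = d.
Proof. by move=> H; rewrite derive1E derive_val. Qed.

Lemma mono_ge0 (f : R -> R) (df : R -> R) :
  (forall x : R, is_derive x 1 f (df x)) -> f 0 = 0 ->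
  (forall x, 0 <= x -> 0 <= df x) -> forall x, 0 <= x -> 0 <= f x.
Proof.
move=> Hd f0 Hdf x x0.
have cf : continuous f.
  move=> y; apply: differentiable_continuous; apply/derivable1_diffP.
  by case: (Hd y).
case: (eqVneq x 0) => [->|xn0]; first by rewrite f0.
have x0' : 0 < x by rewrite lt_neqAle eq_sym xn0.
rewrite -f0; apply: (@ger0_derive1_le_cc _ f 0 x).
- by move=> y _; case: (Hd y).
- move=> y; rewrite in_itv /= => /andP[y0 _]; rewrite derive1_is //.
  exact/Hdf/ltW.
- exact: continuous_subspaceT.
- by rewrite in_itv /= lexx.
- by rewrite in_itv /= lexx x0.
- exact: x0.
Qed.

Lemma sin_le_x (x : R) : 0 <= x -> sin x <= x.
Proof.
move=> x0; rewrite -subr_ge0.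
have D : forall y : R, is_derive y 1 (fun x : R => x - sin x) (1 - cos y).
  by move=> y; apply: is_deriveB.
apply: (@mono_ge0 (fun x : R => x - sin x) (fun x : R => 1 - cos x) D).
- by rewrite sin0 subr0.
- by move=> y _; rewrite subr_ge0 cos_le1.
- exact: x0.
Qed.

Lemma cos_ge (x : R) : 0 <= x -> 1 - x ^+ 2 / 2 <= cos x.
Proof.
move=> x0; rewrite -subr_ge0.
have D : forall y : R, is_derive y 1 (fun x : R => cos x - (1 - x ^+ 2 / 2)) (y - sin y).
  move=> y. apply: is_derive_eq.
  rewrite /= !scaler0 ?addr0. rewrite /GRing.scale /=; lra.
apply: (@mono_ge0 (fun x : R => cos x - (1 - x ^+ 2 / 2)) (fun x : R => x - sin x) D).
- by rewrite cos0 expr0n /= mul0r subr0 subrr.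
- by move=> y y0; rewrite subr_ge0 sin_le_x.
- exact: x0.
Qed.

Lemma sin_ge (x : R) : 0 <= x -> x - x ^+ 3 / 6 <= sin x.
Proof.
move=> x0; rewrite -subr_ge0.
have D : forall y : R, is_derive y 1 (fun x : R => sin x - (x - x ^+ 3 / 6)) (cos y - (1 - y ^+ 2 / 2)).
  move=> y. apply: is_derive_eq.
  rewrite /= !scaler0 ?addr0; rewrite /GRing.scale /=. lra.
apply: (@mono_ge0 (fun x : R => sin x - (x - x ^+ 3 / 6)) (fun x : R => cos x - (1 - x ^+ 2 / 2)) D).
- by rewrite sin0 expr0n /= mul0r subr0 subrr.
- by move=> y y0; rewrite subr_ge0 cos_ge.
- exact: x0.
Qed.


Lemma contF_meas (f : R -> R) (D : set R) : continuous f -> measurable D ->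
  measurable_fun D (fun x => (f x)%:E).
Proof.
move=> cf mD; apply/measurable_EFinP.
exact: (measurable_funS _ (subsetT D) (continuous_measurable_fun cf)).
Qed.

Lemma int_cos_co (a b c : R) : a <= b ->
  (\int[mu]_(t in `[a, b[) (cos (t - c))%:E = (sin (b - c) - sin (a - c))%:E)%E.
Proof.
rewrite le_eqVlt => /predU1P[<-|ab].
  by rewrite set_itvco0 integral_set0 subrr.
have cc : continuous (fun t : R => cos (t - c)).
  move=> x; apply: continuous_comp; last exact: continuous_cos.
  by apply: cvgB; [exact: cvg_id | exact: cvg_cst].
have D : forall x : R, is_derive x 1 (fun t : R => sin (t - c)) (cos (x - c)).
  move=> x.
  have -> : (fun t : R => sin (t - c)) = (fun t => sin t * cos c - cos t * sin c).
    by apply: funext => t; rewrite sinB.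
  apply: is_derive_eq; rewrite cosB /GRing.scale /=; lra.
have cF : continuous (fun t : R => sin (t - c)).
  move=> x; apply: differentiable_continuous; apply/derivable1_diffP.
  by case: (D x).
rewrite integral_itv_bndo_bndc; last exact: contF_meas.
rewrite (@continuous_FTC2 _ _ (fun t : R => sin (t - c))) //.
- exact: continuous_subspaceT.
- split.
  + by move=> x _; case: (D x).
  + exact/cvg_at_right_filter/cF.
  + exact/cvg_at_left_filter/cF.
- by move=> x _; rewrite derive1_is.
Qed.


Lemma int_split (f : R -> R) (a b c : R) : a <= b -> b <= c ->
  measurable_fun `[a, c[ (fun x => (f x)%:E) ->
  (\int[mu]_(x in `[a, c[) (f x)%:E =
   \int[mu]_(x in `[a, b[) (f x)%:E + \int[mu]_(x in `[b, c[) (f x)%:E)%E.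
Proof.
move=> ab bc mf.
rewrite (@itv_bndbnd_setU _ _ (BLeft a) (BLeft b) (BLeft c)); last 2 first.
- by rewrite bnd_simp.
- by rewrite bnd_simp.
rewrite integral_setU //.
- by rewrite -(@itv_bndbnd_setU _ _ (BLeft a) (BLeft b) (BLeft c)) ?bnd_simp.
- apply/disj_setPS => x [] /=; rewrite !in_itv /= => /andP[_ xb] /andP[bx _].
  by move: (lt_le_trans xb bx); rewrite ltxx.
Qed.

Variable Np : nat.
Hypothesis Np0 : (0 < Np)%N.
Let h := phase_h R Np.
Lemma h_gt0 : 0 < h.
Proof. by rewrite /h /phase_h divr_gt0 // ?pi_gt0 // ltr0n. Qed.

Definition gph (t : R) := cos (t - phase_q Np t).

Lemma phase_nd : {homo @phase_q R Np : x y / x <= y}.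
Proof.
move=> x y xy; rewrite /phase_q ler_pM2r ?h_gt0 // lerD2r ler_pM2l // ler_int.
by apply: le_floor; rewrite ler_pM2r // invr_gt0 mulr_gt0 // h_gt0.
Qed.

Lemma meas_gph : measurable_fun setT gph.
Proof.
apply: measurableT_comp; first exact: (continuous_measurable_fun (@continuous_cos R)).
apply: measurable_funB => //.
exact: nondecreasing_measurable phase_nd.
Qed.

Lemma phase_cell (m : int) (t : R) :
  2 * h * m%:~R <= t < 2 * h * (m + 1)%:~R -> phase_q Np t = (2 * m%:~R + 1) * h.
Proof.
move=> /andP[lo hi]; rewrite /phase_q -/h.
have h2 : 0 < 2 * h by rewrite mulr_gt0 // h_gt0.
rewrite (@floor_def _ _ m) //.
by rewrite ler_pdivlMr // ltr_pdivrMr // ![_ * (2 * h)]mulrC lo hi.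
Qed.


Lemma in_co (x a b : R) : x \in (`[a, b[%classic : set R) -> a <= x < b.
Proof. by rewrite inE /= in_itv. Qed.

Lemma per (a : R) :
  (\int[mu]_(t in `[a, (a + 2 * h)%R[) (gph t)%:E = (2 * sin h)%:E)%E.
Proof.
have h2 : 0 < 2 * h by rewrite mulr_gt0 // h_gt0.
set m := Num.floor (a / (2 * h)).
set b := 2 * h * (m + 1)%:~R.
have /andP[lo hi] := floor_itv (a / (2 * h)); rewrite -/m in lo hi.
have ma : 2 * h * m%:~R <= a by rewrite mulrC -ler_pdivlMr.
have ab : a < b by rewrite /b mulrC -ltr_pdivrMr.
have bc : b <= a + 2 * h by rewrite /b intrD mulrDr mulr1 lerD2r.
rewrite (@int_split _ a b); last 3 first.
- exact: ltW.
- exact: bc.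
- apply/measurable_EFinP; exact: (measurable_funS _ (subsetT _) meas_gph).
rewrite (@eq_integral _ _ _ mu _ (fun x => (cos (x - (2 * m%:~R + 1) * h))%:E)); last first.
  move=> x /in_co /andP[xa xb]; rewrite /gph (@phase_cell m) //.
  by rewrite (le_trans ma xa) xb.
rewrite [X in (_ + X)%E](@eq_integral _ _ _ mu _ (fun x => (cos (x - (2 * (m + 1)%:~R + 1) * h))%:E)); last first.
  move=> x /in_co /andP[xa xb]; rewrite /gph (@phase_cell (m + 1)) //.
  rewrite xa /= (lt_le_trans xb) // (@intrD R (m + 1) 1) mulrDr mulr1 lerD2r -/b.
  exact: ltW.
rewrite !int_cos_co //; last exact: ltW.
rewrite -EFinD; congr (_%:E).
have -> : b - (2 * m%:~R + 1) * h = h by rewrite /b intrD; ring.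
have -> : a + 2 * h - (2 * (m + 1)%:~R + 1) * h = a - (2 * m%:~R + 1) * h by rewrite intrD; ring.
have -> : b - (2 * (m + 1)%:~R + 1) * h = - h by rewrite /b intrD; ring.
by rewrite sinN; ring.
Qed.


Lemma per_n (a : R) (n : nat) :
  (\int[mu]_(t in `[a, (a + n%:R * (2 * h))%R[) (gph t)%:E = (n%:R * (2 * sin h))%:E)%E.
Proof.
have h2 : 0 < 2 * h by rewrite mulr_gt0 // h_gt0.
elim: n => [|n IH].
  by rewrite mul0r addr0 set_itvco0 integral_set0 mul0r.
rewrite (@int_split _ a (a + n%:R * (2 * h))); last 3 first.
- by rewrite lerDl mulr_ge0 // ltW.
- by rewrite lerD2l ler_pM2r // ler_nat.
- apply/measurable_EFinP; exact: (measurable_funS _ (subsetT _) meas_gph).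
have -> : a + n.+1%:R * (2 * h) = (a + n%:R * (2 * h)) + 2 * h.
  by rewrite -addn1 natrD; ring.
by rewrite per IH -EFinD -addn1 natrD; congr (_%:E); ring.
Qed.

Lemma int_gph :
  (\int[mu]_(t in [set t : R | (- pi < t <= pi)%R]) (gph t)%:E = (Np%:R * (2 * sin h))%:E)%E.
Proof.
have -> : [set t : R | (- pi < t <= pi)%R] = `]-pi, pi]%classic.
  by apply/seteqP; split => t; rewrite /= in_itv.
rewrite integral_itv_obnd_cbnd; last first.
  apply/measurable_EFinP; exact: (measurable_funS _ (subsetT _) meas_gph).
rewrite -integral_itv_bndo_bndc; last first.
  apply/measurable_EFinP; exact: (measurable_funS _ (subsetT _) meas_gph).
have E : - pi + Np%:R * (2 * h) = pi :> R.
  have nz : Np%:R != 0 :> R by rewrite pnatr_eq0 -lt0n.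
  by rewrite /h /phase_h; field.
by have := per_n (- pi) Np; rewrite E.
Qed.


Definition T : set R := `]-pi, pi]%classic.
Lemma mT : measurable T. Proof. exact: measurable_itv. Qed.

Lemma muT : mu T = (2 * pi)%:E.
Proof.
rewrite /T lebesgue_measure_itv /= lte_fin gtrN ?pi_gt0 //.
by rewrite -EFinB opprK; congr (_%:E); ring.
Qed.

Lemma intT_cst (k : R) : mu.-integrable T (fun _ => k%:E).
Proof.
apply/integrableP; split; first exact/measurable_EFinP/measurable_cst.
rewrite (@integral_cst _ _ _ mu T mT (`|k|%:E)).
rewrite [X in (_ * X < _)%E](_ : _ = (2 * pi)%:E); last exact: muT.
rewrite -EFinM.
exact: ltry.
Qed.


Lemma intT_g : mu.-integrable T (fun t => (gph t)%:E).
Proof.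
apply: (@le_integrable _ _ _ mu T mT _ (fun _ => 1%:E)).
- apply/measurable_EFinP.
  exact: (measurable_funS _ (subsetT _) meas_gph).
- move=> t _; rewrite /= lee_fin normr1 /gph.
  exact: cos_max.
- exact: intT_cst.
Qed.

Lemma intT_gph (B : R) : mu.-integrable T (fun t => (B * gph t)%:E).
Proof.
apply: (@eq_integrable _ _ _ mu T _ (fun x => (B%:E * (gph x)%:E)%E)).
- exact: mT.
- by move=> x _; rewrite EFinM.
- apply: integrableZl; [exact: mT | exact: intT_g].
Qed.

Lemma int_gphT :
  (\int[mu]_(t in T) (gph t)%:E = (Np%:R * (2 * sin h))%:E)%E.
Proof.
have -> : T = [set t : R | (- pi < t <= pi)%R].
  by apply/seteqP; split => t; rewrite /T /= in_itv.
exact: int_gph.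
Qed.

Lemma inner (A B : R) :
  (\int[mu]_(t in T) ((A + B * gph t)%:E) = (A * (2 * pi) + B * (Np%:R * (2 * sin h)))%:E)%E.
Proof.
rewrite integralD_EFin //; last 3 first.
- exact: mT.
- exact: intT_cst.
- exact: intT_gph.
rewrite (@integral_cst _ _ _ mu T mT).
rewrite [X in (_ * X + _)%E](_ : _ = (2 * pi)%:E); last exact: muT.
under eq_integral do rewrite /= EFinM.
rewrite integralZl; [|exact: mT|exact: intT_g].
by rewrite int_gphT -!EFinM -EFinD.
Qed.

End S1.

Section S2.
Variable R : realType.
Notation mu := (@lebesgue_measure R).

Lemma cvg_bound (f : R -> R) : (forall x, 1 <= x -> `|f x| <= 24 / x) ->
  f x @[x --> +oo] --> 0.
Proof.
move=> H; apply/cvgr0Pnorm_lt => e e0.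
near=> x.
have x1 : 1 <= x by near: x; apply: nbhs_pinfty_ge; exact: num_real.
have xe : 24 / e < x by near: x; apply: nbhs_pinfty_gt; exact: num_real.
apply: (le_lt_trans (H x x1)).
have x0 : 0 < x by apply: lt_le_trans x1.
by rewrite ltr_pdivrMr // mulrC -ltr_pdivrMr.
Unshelve. all: end_near. Qed.

Definition E (x : R) := expR (- (x ^+ 2) / 2).

Lemma E_gt0 x : 0 < E x. Proof. exact: expR_gt0. Qed.

Lemma E_bound x : 1 <= x -> (x ^+ 2 + 2) * E x <= 24 / x.
Proof.
move=> x1.
have x0 : 0 < x by apply: lt_le_trans x1.
set Y := expR (x ^+ 2 / 2).
have Y0 : 0 < Y := expR_gt0 _.
have EY : E x = Y^-1 by rewrite /E /Y -expRN mulNr.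
have HY : 1 + (x ^+ 2 / 2) ^+ 2 / 2 <= Y.
  by have := @expR_ge1Dxn R (x ^+ 2 / 2) 1; rewrite /Y; apply; rewrite divr_ge0 // sqr_ge0.
have key : (x ^+ 2 + 2) * x <= 24 * Y.
  have x3 : x ^+ 3 <= x ^+ 4.
    by rewrite [x ^+ 4]exprS ler_peMl // exprn_ge0 // ltW.
  have x4 : x <= x ^+ 4.
    by rewrite exprS ler_peMr // ?(ltW x0) // exprn_ege1.
  have e4 : (x ^+ 2 / 2) ^+ 2 / 2 = x ^+ 4 / 8 by field.
  rewrite e4 in HY.
  have e3 : (x ^+ 2 + 2) * x = x ^+ 3 + 2 * x by ring.
  rewrite e3; lra.
rewrite EY ler_pdivrMr // mulrC mulrA ler_pdivlMr //.
by rewrite mulrC.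
Qed.



Lemma dE (x : R) : is_derive x 1 E (- x * E x).
Proof.
have -> : E = expR \o (fun x => - (x ^+ 2) / 2) by [].
apply: is_derive_eq.
by rewrite /E /= /GRing.scale /=; field.
Qed.

Lemma cE : continuous E.
Proof.
move=> x; apply: differentiable_continuous; apply/derivable1_diffP.
by case: (dE x).
Qed.

Lemma is_derive_cont (f : R -> R) (df : R -> R) :
  (forall x : R, is_derive x 1 f (df x)) -> continuous f.
Proof.
move=> H x; apply: differentiable_continuous; apply/derivable1_diffP.
by case: (H x).
Qed.

Lemma FTCy (f F : R -> R) (l : R) :
  (forall x, 0 <= x -> 0 <= f x) -> continuous f ->
  (forall x : R, is_derive x 1 F (f x)) -> F x @[x --> +oo] --> l ->
  (\int[mu]_(x in `[0%R, +oo[) (f x)%:E = (l - F 0)%:E)%E.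
Proof.
move=> f0 cf dF Fl.
have cF := is_derive_cont dF.
rewrite EFinB; apply: ge0_continuous_FTC2y.
- exact: f0.
- exact: continuous_subspaceT.
- exact: Fl.
- by move=> x _; case: (dF x).
- exact/cvg_at_right_filter/cF.
- by move=> x _; rewrite derive1_is.
Qed.

Lemma I0 : (\int[mu]_(x in `[0%R, +oo[) (x * E x)%:E = 1%:E)%E.
Proof.
have f0 : forall x : R, 0 <= x -> 0 <= x * E x.
  by move=> x x0; rewrite mulr_ge0 // ltW // E_gt0.
have cf : continuous (fun x : R => x * E x).
  by move=> x; apply: continuousM; [exact: cvg_id | exact: cE].
have dF : forall x : R, is_derive x 1 (fun x => - E x) (x * E x).
  by move=> x; apply: is_derive_eq; rewrite /E /GRing.scale /=; field.
have Fl : (- E x) @[x --> +oo] --> (0 : R).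
  rewrite -oppr0; apply: cvgN; apply: cvg_bound => x x1.
  apply: le_trans (E_bound x1).
  rewrite ger0_norm; last exact/ltW/E_gt0.
  rewrite -/(E x); have := E_gt0 x; have := sqr_ge0 x.
  nra.
rewrite (FTCy f0 cf dF Fl).
by rewrite /E expr0n /= oppr0 mul0r expR0 sub0r opprK.
Qed.

Lemma I2 : (\int[mu]_(x in `[0%R, +oo[) (x ^+ 2 * (x * E x))%:E = 2%:E)%E.
Proof.
have f0 : forall x : R, 0 <= x -> 0 <= x ^+ 2 * (x * E x).
  by move=> x x0; rewrite !mulr_ge0 // ?sqr_ge0 // ltW // E_gt0.
have cf : continuous (fun x : R => x ^+ 2 * (x * E x)).
  move=> x; apply: (@continuousM _ _ (fun x : R => x ^+ 2) (fun x : R => x * E x)); first exact: exprn_continuous.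
  by apply: continuousM; [exact: cvg_id | exact: cE].
have dF : forall x : R, is_derive x 1 (fun x => - ((x ^+ 2 + 2) * E x)) (x ^+ 2 * (x * E x)).
  by move=> x; apply: is_derive_eq; rewrite /E /GRing.scale /=; field.
have Fl : (- ((x ^+ 2 + 2) * E x)) @[x --> +oo] --> (0 : R).
  rewrite -oppr0; apply: cvgN; apply: cvg_bound => x x1.
  apply: le_trans (E_bound x1).
  rewrite ger0_norm //; rewrite -/(E x); have := E_gt0 x; have := sqr_ge0 x; nra.
rewrite (FTCy f0 cf dF Fl).
by rewrite /E expr0n /= oppr0 mul0r expR0 add0r mulr1 opprK add0r.
Qed.

End S2.

Section Q.
Variable R : realType.
Notation mu := (@lebesgue_measure R).
Variables (N : nat) (t y : nat -> R) (Q : R -> R).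
Hypothesis N0 : (0 < N)%N.
Hypothesis Hq : quantizer_with N t y Q.

Lemma t_mono i k : (i + k < N)%N -> t i <= t (i + k).
Proof.
case: Hq => _ [tinc _].
elim: k => [|k IH] H; first by rewrite addn0.
apply: le_trans (IH _) _; first by apply: leq_ltn_trans H; rewrite leq_add2l.
by rewrite addnS; apply/ltW/tinc; rewrite -addnS.
Qed.

Lemma t_ge0 i : (i < N)%N -> 0 <= t i.
Proof.
move=> iN; case: Hq => t0 _; rewrite -t0.
by have := @t_mono 0 i; rewrite add0n; apply.
Qed.

Lemma cell_ge0 i u : (i < N)%N -> qcell t N i u -> 0 <= u.
Proof.
move=> iN; rewrite /qcell; case: ifP => _ /=.
- by case/andP => + _; apply: le_trans; exact: t_ge0.
- by apply: le_trans; exact: t_ge0.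
Qed.

Lemma cell_cover u : 0 <= u -> exists2 i, (i < N)%N & qcell t N i u.
Proof.
move=> u0.
have exP : exists j, (j < N)%N && (t j <= u).
  by exists 0%N; rewrite N0 /=; case: Hq => ->.
have bnd : forall j, (j < N)%N && (t j <= u) -> (j <= N)%N.
  by move=> j /andP[/ltnW].
case: (ex_maxnP exP bnd) => i /andP[iN tiu] imax.
exists i => //; rewrite /qcell; case: ifP => // i1N /=.
rewrite tiu /=; rewrite ltNge; apply/negP => ti1.
have := imax i.+1; rewrite i1N ti1 => /(_ isT).
by rewrite ltnn.
Qed.

Lemma cell_disj i j u : (i < N)%N -> (j < N)%N ->
  qcell t N i u -> qcell t N j u -> i = j.
Proof.
wlog ij : i j / (i <= j)%N.
  move=> W iN jN ci cj; case: (leqP i j) => [ij|ji]; first exact: W.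
  by apply/esym; apply: W => //; exact: ltnW.
move=> iN jN; rewrite leq_eqVlt in ij; case/orP: ij => [/eqP //|ij].
have i1N : (i.+1 < N)%N by apply: leq_ltn_trans jN.
rewrite /qcell i1N /= => /andP[_ ui1].
have := @t_mono i.+1 (j - i.+1); rewrite subnKC // => /(_ jN) tij.
case: ifP => _ /=; [case/andP => tju _ | move=> tju];
  by move: (lt_le_trans ui1 (le_trans tij tju)); rewrite ltxx.
Qed.

Lemma cell_meas i : measurable (qcell t N i).
Proof.
rewrite /qcell; case: ifP => _.
- have -> : [set u | t i <= u < t i.+1] = `[t i, t i.+1[%classic.
    by apply/seteqP; split => u; rewrite /= in_itv.
  exact: measurable_itv.
- have -> : [set u | t i <= u] = `[t i, +oo[%classic.
    by apply/seteqP; split => u; rewrite /= in_itv /= andbT.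
  exact: measurable_itv.
Qed.

Definition D0 : set R := `[0%R, +oo[%classic.

Lemma D0_big : D0 = \big[setU/set0]_(i <- iota 0 N) qcell t N i.
Proof.
apply/seteqP; split => u.
- rewrite /D0 /= in_itv /= andbT => u0.
  case: (cell_cover u0) => i iN ci.
  rewrite -bigcup_seq; exists i => //=.
  by rewrite mem_iota add0n.
- rewrite -bigcup_seq => -[i /=]; rewrite mem_iota add0n => iN ci.
  by rewrite /D0 /= in_itv /= andbT; apply: cell_ge0 ci.
Qed.


Lemma cell_Q i u : (i < N)%N -> qcell t N i u -> Q u = y i.
Proof. by case: Hq => _ [_ H] iN; apply: H. Qed.

Definition Bq := \sum_(i < N) `|y i|.

Lemma Q_bound u : 0 <= u -> `|Q u| <= Bq.
Proof.
move=> u0; case: (cell_cover u0) => i iN ci.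
rewrite (cell_Q iN ci) /Bq (bigD1 (Ordinal iN)) //= lerDl.
by apply: sumr_ge0 => j _.
Qed.

Lemma meas_big (f : R -> R) (s : seq nat) :
  (forall i, (i < N)%N -> measurable_fun (qcell t N i) f) ->
  all (fun i => (i < N)%N) s ->
  measurable_fun (\big[setU/set0]_(i <- s) qcell t N i) f.
Proof.
move=> Hf; elim: s => [|i s IH]; first by rewrite big_nil => _; exact: measurable_fun_set0.
rewrite big_cons /= => /andP[iN sN].
apply/measurable_funU; [exact: cell_meas | | split].
- by apply: bigsetU_measurable => j _; exact: cell_meas.
- exact: Hf.
- exact: IH.
Qed.

Lemma all_iota : all (fun i => (i < N)%N) (iota 0 N).
Proof. by apply/allP => i; rewrite mem_iota add0n. Qed.

Lemma Q_meas : measurable_fun D0 Q.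
Proof.
rewrite D0_big; apply: meas_big; last exact: all_iota.
move=> i iN; apply: (@eq_measurable_fun _ _ _ _ _ (cst (y i))).
  by move=> u; rewrite inE => ci; rewrite (cell_Q iN ci).
exact: measurable_cst.
Qed.

Lemma triv_cells : trivIset [set` iota 0 N] (qcell t N).
Proof.
apply/trivIsetP => i j /=; rewrite !mem_iota !add0n => iN jN ij.
apply/seteqP; split => // u [ci cj].
by move: ij; rewrite (cell_disj iN jN ci cj) eqxx.
Qed.

Lemma int_cells (f : R -> R) : measurable_fun D0 f ->
  (\int[mu]_(u in D0) (f u)%:E = \sum_(i <- iota 0 N) \int[mu]_(u in qcell t N i) (f u)%:E)%E.
Proof.
move=> mf; rewrite D0_big; apply: integral_bigsetU_EFin.
- exact: cell_meas.
- exact: iota_uniq.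
- exact: triv_cells.
- by rewrite -D0_big; exact/measurable_EFinP.
Qed.

End Q.

Section M.
Variable R : realType.
Notation mu := (@lebesgue_measure R).
Notation D0 := (@D0 R).
Notation p := (@rayleigh_pdf R).

Lemma mD0 : measurable D0. Proof. exact: measurable_itv. Qed.

Lemma D0E : [set u : R | (0 <= u)%R] = D0.
Proof. by apply/seteqP; split => u; rewrite /D0 /= in_itv /= andbT. Qed.

Lemma p_ge0 u : 0 <= u -> 0 <= p u.
Proof. by move=> u0; rewrite /rayleigh_pdf mulr_ge0 // expR_ge0. Qed.

Lemma cp : continuous p.
Proof.
have -> : p = (fun x : R => x * E x) by [].
by move=> x; apply: continuousM; [exact: cvg_id | exact: cE].
Qed.

Lemma int_of_val (f : R -> R) (v : R) : (forall u, 0 <= u -> 0 <= f u) ->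
  measurable_fun D0 f -> (\int[mu]_(u in D0) (f u)%:E = v%:E)%E ->
  mu.-integrable D0 (fun u => (f u)%:E).
Proof.
move=> f0 mf fv; apply/integrableP; split; first exact/measurable_EFinP.
rewrite (@eq_integral _ _ _ mu _ (fun u => (f u)%:E)); first by rewrite fv ltry.
move=> u; rewrite inE /D0 /= in_itv /= andbT => u0.
by rewrite /= ger0_norm // f0.
Qed.

Lemma meas_cont (f : R -> R) : continuous f -> measurable_fun D0 f.
Proof.
move=> cf; exact: (measurable_funS _ (subsetT D0) (continuous_measurable_fun cf)).
Qed.

Lemma int_p : mu.-integrable D0 (fun u => (p u)%:E).
Proof.
apply: (@int_of_val _ 1); [exact: p_ge0 | exact: meas_cont cp | exact: I0].
Qed.

Lemma int_u2p : mu.-integrable D0 (fun u => (u ^+ 2 * p u)%:E).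
Proof.
apply: (@int_of_val _ 2).
- by move=> u u0; rewrite mulr_ge0 ?sqr_ge0 ?p_ge0.
- apply: meas_cont => x; apply: (@continuousM _ _ (fun x : R => x ^+ 2) p); last exact: cp.
  exact: exprn_continuous.
- exact: I2.
Qed.

Lemma intD' (f g : R -> R) : mu.-integrable D0 (fun u => (f u)%:E) ->
  mu.-integrable D0 (fun u => (g u)%:E) -> mu.-integrable D0 (fun u => (f u + g u)%:E).
Proof.
move=> i1 i2; apply: (@eq_integrable _ _ _ mu D0 _ (fun u => (f u)%:E + (g u)%:E)%E).
- exact: mD0.
- by move=> u _; rewrite EFinD.
- by apply: integrableD => //; exact: mD0.
Qed.

Lemma intZ' (k : R) (f : R -> R) : mu.-integrable D0 (fun u => (f u)%:E) ->
  mu.-integrable D0 (fun u => (k * f u)%:E).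
Proof.
move=> i1; apply: (@eq_integrable _ _ _ mu D0 _ (fun u => k%:E * (f u)%:E)%E).
- exact: mD0.
- by move=> u _; rewrite EFinM.
- by apply: integrableZl => //; exact: mD0.
Qed.

Lemma intgD (f g : R -> R) : mu.-integrable D0 (fun u => (f u)%:E) ->
  mu.-integrable D0 (fun u => (g u)%:E) ->
  (\int[mu]_(u in D0) (f u + g u)%:E = \int[mu]_(u in D0) (f u)%:E + \int[mu]_(u in D0) (g u)%:E)%E.
Proof.
move=> i1 i2; rewrite integralD_EFin //. all: first [exact: mD0 | exact: i1 | exact: i2].
Qed.

Lemma intgZ (k : R) (f : R -> R) : mu.-integrable D0 (fun u => (f u)%:E) ->
  (\int[mu]_(u in D0) (k * f u)%:E = k%:E * \int[mu]_(u in D0) (f u)%:E)%E.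
Proof.
move=> i1; under eq_integral do rewrite EFinM.
rewrite integralZl //. all: first [exact: mD0 | exact: i1].
Qed.


Lemma int_up : mu.-integrable D0 (fun u => (u * p u)%:E).
Proof.
apply: (@le_integrable _ _ _ mu D0 _ _ (fun u => (p u + u ^+ 2 * p u)%:E)).
- exact: mD0.
- apply/measurable_EFinP; apply: meas_cont => x.
  by apply: (@continuousM _ _ id p); [exact: cvg_id | exact: cp].
- move=> u; rewrite /D0 /= in_itv /= andbT => u0.
  rewrite lee_fin ger0_norm ?mulr_ge0 ?p_ge0 // ger0_norm; last first.
    by rewrite addr_ge0 ?mulr_ge0 ?sqr_ge0 ?p_ge0.
  have := p_ge0 u0; have := sqr_ge0 (u - 1/2); nra.
- exact: intD' int_p int_u2p.
Qed.

Variables (N : nat) (t y : nat -> R) (Q : R -> R).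
Hypothesis N0 : (0 < N)%N.
Hypothesis Hq : quantizer_with N t y Q.

Let B := Bq N y.
Lemma B_ge0 : 0 <= B. Proof. by apply: sumr_ge0 => i _. Qed.

Lemma mQ : measurable_fun D0 Q. Proof. exact: (Q_meas N0 Hq). Qed.

Lemma int_uQp : mu.-integrable D0 (fun u => (u * Q u * p u)%:E).
Proof.
apply: (@le_integrable _ _ _ mu D0 _ _ (fun u => (B * (u * p u))%:E)).
- exact: mD0.
- apply/measurable_EFinP; apply: measurable_funM; last exact: meas_cont cp.
  apply: measurable_funM; last exact: mQ.
  by apply: meas_cont => x; exact: cvg_id.
- move=> u; rewrite /D0 /= in_itv /= andbT => u0.
  have Qb := Q_bound N0 Hq u0.
  have pu0 := p_ge0 u0; set pu := p u in pu0 *.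
  rewrite lee_fin [leRHS]ger0_norm; last by rewrite !mulr_ge0 ?B_ge0.
  rewrite -/B in Qb; move: Qb; rewrite ler_norml => /andP[q1 q2].
  have h0 : 0 <= u * pu by rewrite mulr_ge0.
  rewrite ler_norml; apply/andP; split; nra.
- exact: intZ' int_up.
Qed.

Lemma int_Q2p : mu.-integrable D0 (fun u => (Q u ^+ 2 * p u)%:E).
Proof.
apply: (@le_integrable _ _ _ mu D0 _ _ (fun u => (B ^+ 2 * p u)%:E)).
- exact: mD0.
- apply/measurable_EFinP; apply: measurable_funM; last exact: meas_cont cp.
  by apply: measurable_funX; exact: mQ.
- move=> u; rewrite /D0 /= in_itv /= andbT => u0.
  have Qb := Q_bound N0 Hq u0.
  have pu0 := p_ge0 u0; set pu := p u in pu0 *.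
  rewrite lee_fin [leRHS]ger0_norm; last by apply: mulr_ge0 => //; exact: sqr_ge0.
  rewrite -/B in Qb; move: Qb; rewrite ler_norml => /andP[q1 q2].
  have q3 : Q u ^+ 2 <= B ^+ 2 by nra.
  rewrite ger0_norm; last by rewrite mulr_ge0 ?sqr_ge0.
  by rewrite ler_wpM2r.
- exact: intZ' int_p.
Qed.

Lemma dQ_eq u : (u - Q u) ^+ 2 * p u = u ^+ 2 * p u + ((-2) * (u * Q u * p u) + Q u ^+ 2 * p u).
Proof. ring. Qed.

Lemma int_dQp : mu.-integrable D0 (fun u => ((u - Q u) ^+ 2 * p u)%:E).
Proof.
apply: (@eq_integrable _ _ _ mu D0 _ (fun u => (u ^+ 2 * p u + ((-2) * (u * Q u * p u) + Q u ^+ 2 * p u))%:E)).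
- exact: mD0.
- by move=> u _; rewrite dQ_eq.
- apply: intD'; first exact: int_u2p.
  apply: intD'; last exact: int_Q2p.
  exact: intZ' int_uQp.
Qed.


Lemma sq_err_eq (sigma : R) (Np : nat) (u th : R) :
  sq_err sigma Q Np u th * (p u / (2 * pi)) =
  sigma ^+ 2 * (u ^+ 2 + Q u ^+ 2) * (p u / (2 * pi)) +
  (- (2 * sigma ^+ 2 * u * Q u) * (p u / (2 * pi))) * gph Np th.
Proof.
rewrite /sq_err /gph cosB.
set c1 := cos th; set s1 := sin th; set c2 := cos (phase_q Np th); set s2 := sin (phase_q Np th).
have e1 : c1 ^+ 2 + s1 ^+ 2 = 1 by exact: cos2Dsin2.
have e2 : c2 ^+ 2 + s2 ^+ 2 = 1 by exact: cos2Dsin2.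
have e : (sigma * u * c1 - sigma * Q u * c2) ^+ 2 + (sigma * u * s1 - sigma * Q u * s2) ^+ 2 =
  sigma ^+ 2 * u ^+ 2 * (c1 ^+ 2 + s1 ^+ 2) + sigma ^+ 2 * Q u ^+ 2 * (c2 ^+ 2 + s2 ^+ 2)
  - 2 * sigma ^+ 2 * u * Q u * (c1 * c2 + s1 * s2) by ring.
by rewrite e e1 e2; ring.
Qed.

Lemma TE : [set x : R | (- pi < x <= pi)%R] = @T R.
Proof. by apply/seteqP; split => th; rewrite /T /= in_itv. Qed.

Lemma part1 (sigma : R) (Np : nat) : (0 < Np)%N ->
  (E_joint (sq_err sigma Q Np)
     = (sigma ^+ 2)%:E * C_LM Q + (2 * sigma ^+ 2 * eta R Np)%:E * M_a Q)%E.
Proof.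
move=> Np0.
rewrite /E_joint /C_LM /M_a /E_U D0E /=.
rewrite (@eq_integral _ _ _ mu _ (fun u => (sigma ^+ 2 * ((u - Q u) ^+ 2 * p u)
   + (2 * sigma ^+ 2 * eta R Np) * (u * Q u * p u))%:E)); last first.
  move=> u _; rewrite TE.
  under eq_integral do rewrite sq_err_eq.
  rewrite (inner Np0); congr (_%:E).
  have nz : Np%:R != 0 :> R by rewrite pnatr_eq0 -lt0n.
  have pz : pi != 0 :> R by rewrite gt_eqF // pi_gt0.
  rewrite /eta /phase_h; move: pz; move: (pi : R) => P pz; field.
  by rewrite nz pz.
rewrite intgD; last 2 first.
- exact/intZ'/int_dQp.
- exact/intZ'/int_uQp.
rewrite intgZ; last exact: int_dQp.
rewrite intgZ; last exact: int_uQp.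
done.
Qed.


Lemma intS_cell (f : R -> R) i : (i < N)%N ->
  mu.-integrable D0 (fun u => (f u)%:E) -> mu.-integrable (qcell t N i) (fun u => (f u)%:E).
Proof.
move=> iN hf; apply: (@integrableS _ _ _ mu D0) => //.
- exact: mD0.
- exact: cell_meas.
- move=> u ci; rewrite /D0 /= in_itv /= andbT.
  exact: (cell_ge0 Hq iN ci).
Qed.

Lemma fin_int (D : set R) (f : R -> R) : measurable D ->
  mu.-integrable D (fun u => (f u)%:E) ->
  (\int[mu]_(u in D) (f u)%:E)%E = (fine (\int[mu]_(u in D) (f u)%:E))%:E.
Proof.
move=> mD hf; rewrite fineK //; apply: integrable_fin_num => //.
Qed.


Section gen.
Variable D : set R.
Hypothesis mD : measurable D.

Lemma gintD (f g : R -> R) : mu.-integrable D (fun u => (f u)%:E) ->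
  mu.-integrable D (fun u => (g u)%:E) -> mu.-integrable D (fun u => (f u + g u)%:E).
Proof.
move=> i1 i2; apply: (@eq_integrable _ _ _ mu D _ (fun u => (f u)%:E + (g u)%:E)%E).
- exact: mD.
- by move=> u _; rewrite EFinD.
- by apply: integrableD => //; exact: mD.
Qed.

Lemma gintZ (k : R) (f : R -> R) : mu.-integrable D (fun u => (f u)%:E) ->
  mu.-integrable D (fun u => (k * f u)%:E).
Proof.
move=> i1; apply: (@eq_integrable _ _ _ mu D _ (fun u => k%:E * (f u)%:E)%E).
- exact: mD.
- by move=> u _; rewrite EFinM.
- by apply: integrableZl => //; exact: mD.
Qed.

Lemma gintgD (f g : R -> R) : mu.-integrable D (fun u => (f u)%:E) ->
  mu.-integrable D (fun u => (g u)%:E) ->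
  (\int[mu]_(u in D) (f u + g u)%:E = \int[mu]_(u in D) (f u)%:E + \int[mu]_(u in D) (g u)%:E)%E.
Proof.
move=> i1 i2; rewrite integralD_EFin //. all: first [exact: mD | exact: i1 | exact: i2].
Qed.

Lemma gintgZ (k : R) (f : R -> R) : mu.-integrable D (fun u => (f u)%:E) ->
  (\int[mu]_(u in D) (k * f u)%:E = k%:E * \int[mu]_(u in D) (f u)%:E)%E.
Proof.
move=> i1; under eq_integral do rewrite EFinM.
rewrite integralZl //. all: first [exact: mD | exact: i1].
Qed.
End gen.

Hypothesis Hc : forall i, (i < N)%N ->
  ((y i)%:E * \int[mu]_(u in qcell t N i) (p u)%:E
       = \int[mu]_(u in qcell t N i) (u * p u)%:E)%E.

Lemma cell_zero i : (i < N)%N ->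
  (\int[mu]_(u in qcell t N i) (u * Q u * p u + (-1) * (Q u ^+ 2 * p u))%:E = 0)%E.
Proof.
move=> iN.
have mc : measurable (qcell t N i) by exact: cell_meas.
rewrite (@eq_integral _ _ _ mu _ (fun u => (y i * (u * p u) + (- y i ^+ 2) * p u)%:E)); last first.
  move=> u; rewrite inE => ci; rewrite (cell_Q Hq iN ci); congr (_%:E); ring.
have i0 := intS_cell iN int_p.
have i1 := intS_cell iN int_up.
rewrite gintgD //; [|exact: gintZ|exact: gintZ].
rewrite !gintgZ //.
rewrite -Hc // (fin_int mc i0) -!EFinM -EFinD; congr (_%:E); ring.
Qed.

Lemma MQ2 : (\int[mu]_(u in D0) (u * Q u * p u)%:E = \int[mu]_(u in D0) (Q u ^+ 2 * p u)%:E)%E.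
Proof.
have iz : mu.-integrable D0 (fun u => (u * Q u * p u + (-1) * (Q u ^+ 2 * p u))%:E).
  by apply: intD'; [exact: int_uQp | exact/intZ'/int_Q2p].
have z : (\int[mu]_(u in D0) (u * Q u * p u + (-1) * (Q u ^+ 2 * p u))%:E = 0)%E.
  rewrite (int_cells N0 Hq); last first.
    by apply/measurable_EFinP; exact: (measurable_int _ iz).
  rewrite big_seq big1 // => i; rewrite mem_iota add0n => iN.
  exact: cell_zero.
move: z; rewrite intgD; [|exact: int_uQp|exact/intZ'/int_Q2p].
rewrite intgZ; last exact: int_Q2p.
rewrite (fin_int mD0 int_uQp) (fin_int mD0 int_Q2p) -EFinM -EFinD => /eqP.
by rewrite eqe addr_eq0 mulN1r opprK => /eqP ->.
Qed.


Let m := fine (\int[mu]_(u in D0) (u * Q u * p u)%:E)%E.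

Lemma M_val : M_a Q = m%:E.
Proof. by rewrite /M_a /E_U D0E /= -(fin_int mD0 int_uQp). Qed.

Lemma m_ge0 : 0 <= m.
Proof.
rewrite /m MQ2; apply: fine_ge0; apply: integral_ge0 => u.
rewrite /D0 /= in_itv /= andbT => u0.
by rewrite lee_fin mulr_ge0 ?sqr_ge0 ?p_ge0.
Qed.

Lemma C_val : C_LM Q = (2 - m)%:E.
Proof.
rewrite /C_LM /E_U D0E /=.
under eq_integral do rewrite dQ_eq.
rewrite intgD; last 2 first.
- exact: int_u2p.
- by apply: intD'; [exact/intZ'/int_uQp | exact: int_Q2p].
rewrite intgD; last 2 first.
- exact/intZ'/int_uQp.
- exact: int_Q2p.
rewrite intgZ; last exact: int_uQp.
rewrite -MQ2 (fin_int mD0 int_uQp) -/m.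
rewrite (_ : (\int[mu]_(u in D0) (u ^+ 2 * p u)%:E)%E = 2%:E); last exact: I2.
by rewrite -EFinM -!EFinD; congr (_%:E); ring.
Qed.

End M.

Lemma eta_le (R : realType) (Np : nat) : (0 < Np)%N ->
  eta R Np <= (pi / Np%:R) ^+ 2 / 6.
Proof.
move=> Np0; rewrite /eta; set h := pi / Np%:R.
have h0 : 0 < h by rewrite /h divr_gt0 // ?pi_gt0 // ltr0n.
have := sin_ge (ltW h0) => sg.
have : 1 - h ^+ 2 / 6 <= sin h / h.
  rewrite ler_pdivlMr //; apply: le_trans sg; rewrite le_eqVlt; apply/orP; left.
  by apply/eqP; ring.
lra.
Qed.

End Helpers.
Import Helpers.

Theorem mainTheorem3 (R : realType) (sigma : R) (Na Np : nat) (Q : R -> R) :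
  0 < sigma -> (0 < Na)%N -> (0 < Np)%N -> lloyd_max Na Q ->
  (E_joint (sq_err sigma Q Np)
     = (sigma ^+ 2)%:E * C_LM Q + (2 * sigma ^+ 2 * eta R Np)%:E * M_a Q)%E /\
  (centroid_quantizer Na Q ->
     (M_a Q = 2%:E - C_LM Q)%E /\
     (E_joint (sq_err sigma Q Np)
        = (sigma ^+ 2)%:E * (C_LM Q + 2%:E * (2%:E - C_LM Q) * (eta R Np)%:E))%E /\
     (E_joint (sq_err sigma Q Np)
        <= (sigma ^+ 2)%:E * (C_LM Q + (2%:E - C_LM Q)
                                 * (pi ^+ 2 / (3 * (Np%:R) ^+ 2))%:E))%E).
Proof.
move=> s0 Na0 Np0 [[t [y Hq]] _].
split; first exact: (part1 Na0 Hq sigma Np0).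
move=> [t' [y' [Hq' Hc]]].
have P1 := part1 Na0 Hq' sigma Np0.
have mg := m_ge0 Na0 Hq' Hc.
rewrite P1 (M_val Na0 Hq') (C_val Na0 Hq' Hc).
move: mg; set m := fine _ => mg.
split; [|split].
- by rewrite -EFinB; congr (_%:E); ring.
- by rewrite -!EFinB -!EFinM -EFinD; congr (_%:E); ring.
- rewrite -!EFinB -!EFinM -!EFinD lee_fin.
  have el := eta_le R Np0.
  have nz : Np%:R != 0 :> R by rewrite pnatr_eq0 -lt0n.
  have -> : pi ^+ 2 / (3 * Np%:R ^+ 2) = (pi / Np%:R) ^+ 2 / 3 :> R by field.
  move: el; set e := eta R Np; set h2 := (pi / Np%:R) ^+ 2 => el.
  have s2 : 0 <= sigma ^+ 2 by exact: sqr_ge0.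
  have k : 0 <= m * (h2 / 3 - 2 * e) by apply: mulr_ge0 => //; lra.
  have k2 : 0 <= sigma ^+ 2 * (m * (h2 / 3 - 2 * e)) by apply: mulr_ge0.
  have -> : 2 - (2 - m) = m by ring.
  lra.
Qed.
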